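(* Let $\mathcal{C}$ be a monoidal C*-category and let $\perp$ be a symmetric binary relation on the set of objects of $\mathcal{C}$ such that: (1) if $\rho_1\perp\rho_2$ then $\rho_1\rho_2=\rho_2\rho_1$; (2) if $t_j:\sigma_j\to\tau_j$ ($j=1,2$) with $\sigma_1\perp\sigma_2$ and $\tau_1\perp\tau_2$, then $t_1\otimes t_2=t_2\otimes t_1$; (3) there exist two full monoidal C*-subcategories $\mathcal{C}_1,\mathcal{C}_2\subset\mathcal{C}$, each equivalent to $\mathcal{C}$, with $\rho_1\perp\rho_2$ for all objects $\rho_1\in\mathcal{C}_1$, $\rho_2\in\mathcal{C}_2$. Then $\mathcal{C}$ possesses a unique symmetry $\epsilon$ satisfying $\epsilon(\rho_1,\rho_2)=\mathbf{1}_{\rho_1\rho_2}$ whenever $\rho_1\perp\rho_2$.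
   Context: A monoidal C*-category: a C*-category (complex Banach morphism spaces $I(\sigma,\tau)$, bilinear composition with $\|s\circ t\|\le\|s\|\|t\|$, antilinear involution $*$ with $(s\circ t)^*=t^*\circ s^*$ and $\|t^*t\|=\|t\|^2$) with associative products $\sigma\tau$ on objects and $\otimes$ on morphisms, $t_1\otimes t_2:\sigma_1\sigma_2\to\tau_1\tau_2$, $\mathbf{1}_{\rho_1}\otimes\mathbf{1}_{\rho_2}=\mathbf{1}_{\rho_1\rho_2}$, $(s_1\circ t_1)\otimes(s_2\circ t_2)=(s_1\otimes s_2)\circ(t_1\otimes t_2)$, a unit object $\iota$ neutral for the object product with $\mathbf{1}_\iota$ neutral for $\otimes$, $\otimes$ bilinear and $(t_1\otimes t_2)^*=t_1^*\otimes t_2^*$. A full monoidal C*-subcategory is a full subcategory containing $\iota$ and closed under the object product; it is equivalent to $\mathcal{C}$ if every object of $\mathcal{C}$ is unitarily equivalent (isomorphic via a unitary morphism) to an object of the subcategory. A symmetry is a family of unitaries $\epsilon(\sigma,\tau):\sigma\tau\to\tau\sigma$ with $\epsilon(\sigma,\tau)^*=\epsilon(\tau,\sigma)$, $\epsilon(\iota,\rho)=\epsilon(\rho,\iota)=\mathbf{1}_\rho$, $\epsilon(\sigma\rho,\tau)=(\epsilon(\sigma,\tau)\otimes\mathbf{1}_\rho)\circ(\mathbf{1}_\sigma\otimes\epsilon(\rho,\tau))$, and $\epsilon(\tau_1,\tau_2)\circ(t_1\otimes t_2)=(t_2\otimes t_1)\circ\epsilon(\sigma_1,\sigma_2)$ for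 all $t_j:\sigma_j\to\tau_j$. *)

(* Defs.v *)
From HB Require Import structures.
From mathcomp Require Import all_boot all_order all_algebra.
From mathcomp Require Import complex.
From mathcomp Require Import all_classical all_reals all_analysis.
Set Implicit Arguments. Unset Strict Implicit. Unset Printing Implicit Defensive.
Import Order.TTheory GRing.Theory Num.Theory.
Local Open Scope ring_scope.

(* Heterogeneous equality of morphisms living in possibly different
   (but, as a consequence, propositionally equal) hom-spaces. *)
Definition HomEq (Ob : Type) (H : Ob -> Ob -> Type) (a b a' b' : Ob)
  (f : H a b) (g : H a' b') : Prop :=
  existT (fun p : Ob * Ob => H p.1 p.2) (a, b) f =
  existT (fun p : Ob * Ob => H p.1 p.2) (a', b') g.
Arguments HomEq {Ob} H {a b a' b'} f g.

(* A (strict) monoidal C*-category over the complex numbers R[i]: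
   every hom-space is a complex Banach space. *)
Record MonCstarCat (R : realType) := {
  Ob : Type;
  hom : Ob -> Ob -> completeNormedModType R[i];
  hcomp : forall a b c, hom b c -> hom a b -> hom a c;
  idm : forall a, hom a a;
  star : forall a b, hom a b -> hom b a;
  omul : Ob -> Ob -> Ob;
  ounit : Ob;
  tens : forall a1 a2 b1 b2, hom a1 b1 -> hom a2 b2 -> hom (omul a1 a2) (omul b1 b2);
  compA : forall a b c d (h : hom c d) (g : hom b c) (f : hom a b),
      hcomp h (hcomp g f) = hcomp (hcomp h g) f;
  comp1m : forall a b (f : hom a b), hcomp (idm b) f = f;
  compm1 : forall a b (f : hom a b), hcomp f (idm a) = f;
  compDl : forall a b c (g1 g2 : hom b c) (f : hom a b),
      hcomp (g1 + g2) f = hcomp g1 f + hcomp g2 f;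
  compDr : forall a b c (g : hom b c) (f1 f2 : hom a b),
      hcomp g (f1 + f2) = hcomp g f1 + hcomp g f2;
  compZl : forall a b c (k : R[i]) (g : hom b c) (f : hom a b),
      hcomp (k *: g) f = k *: hcomp g f;
  compZr : forall a b c (k : R[i]) (g : hom b c) (f : hom a b),
      hcomp g (k *: f) = k *: hcomp g f;
  hcomp_norm : forall a b c (g : hom b c) (f : hom a b),
      `|hcomp g f| <= `|g| * `|f|;
  starD : forall a b (f g : hom a b), star (f + g) = star f + star g;
  starZ : forall a b (k : R[i]) (f : hom a b), star (k *: f) = k^* *: star f;
  starK : forall a b (f : hom a b), star (star f) = f;
  star_comp : forall a b c (g : hom b c) (f : hom a b),
      star (hcomp g f) = hcomp (star f) (star g);
  cstar : forall a b (f : hom a b), `|hcomp (star f) f| = `|f| ^+ 2;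
  omulA : forall a b c, omul a (omul b c) = omul (omul a b) c;
  omul1x : forall a, omul ounit a = a;
  omulx1 : forall a, omul a ounit = a;
  tens_id : forall a b, tens (idm a) (idm b) = idm (omul a b);
  tens_comp : forall a1 a2 b1 b2 c1 c2 (s1 : hom b1 c1) (t1 : hom a1 b1)
      (s2 : hom b2 c2) (t2 : hom a2 b2),
      tens (hcomp s1 t1) (hcomp s2 t2) = hcomp (tens s1 s2) (tens t1 t2);
  tensA : forall a1 a2 a3 b1 b2 b3 (t1 : hom a1 b1) (t2 : hom a2 b2)
      (t3 : hom a3 b3),
      HomEq hom (tens t1 (tens t2 t3)) (tens (tens t1 t2) t3);
  tens1x : forall a b (t : hom a b), HomEq hom (tens (idm ounit) t) t;
  tensx1 : forall a b (t : hom a b), HomEq hom (tens t (idm ounit)) t;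
  tensDl : forall a1 a2 b1 b2 (f g : hom a1 b1) (h : hom a2 b2),
      tens (f + g) h = tens f h + tens g h;
  tensDr : forall a1 a2 b1 b2 (h : hom a1 b1) (f g : hom a2 b2),
      tens h (f + g) = tens h f + tens h g;
  tensZl : forall a1 a2 b1 b2 (k : R[i]) (f : hom a1 b1) (h : hom a2 b2),
      tens (k *: f) h = k *: tens f h;
  tensZr : forall a1 a2 b1 b2 (k : R[i]) (h : hom a1 b1) (f : hom a2 b2),
      tens h (k *: f) = k *: tens h f;
  star_tens : forall a1 a2 b1 b2 (f : hom a1 b1) (g : hom a2 b2),
      star (tens f g) = tens (star f) (star g)
}.

Arguments hcomp {R} m {a b c}.
Arguments idm {R} m a.
Arguments star {R} m {a b}.
Arguments omul {R} m.
Arguments ounit {R} m.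
Arguments tens {R} m {a1 a2 b1 b2}.
Arguments hom {R} m.
Arguments Ob {R} m.

Section Defs.
Variables (R : realType) (C : MonCstarCat R).

Definition unitary (a b : Ob C) (u : hom C a b) : Prop :=
  hcomp C (star C u) u = idm C a /\ hcomp C u (star C u) = idm C b.

(* the identity of (a b) c, viewed as a morphism a (b c) -> (a b) c *)
Definition assocU (a b c : Ob C) : hom C (omul C a (omul C b c)) (omul C (omul C a b) c) :=
  eq_rect_r (fun x => hom C x (omul C (omul C a b) c))
            (idm C (omul C (omul C a b) c)) (@omulA _ C a b c).

(* full monoidal C*-subcategory, given by its (predicate of) objects *)
Definition full_monoidal_sub (P : Ob C -> Prop) : Prop :=
  P (ounit C) /\ (forall a b, P a -> P b -> P (omul C a b)).

Definition equivalent_to_C (P : Ob C -> Prop) : Prop :=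
  forall a, exists b (u : hom C a b), P b /\ unitary u.

Definition is_symmetry (eps : forall a b, hom C (omul C a b) (omul C b a)) : Prop :=
  (forall a b, unitary (eps a b)) /\
  (forall a b, star C (eps a b) = eps b a) /\
  (forall r, HomEq (hom C) (eps (ounit C) r) (idm C r)) /\
  (forall r, HomEq (hom C) (eps r (ounit C)) (idm C r)) /\
  (forall s r t, HomEq (hom C) (eps (omul C s r) t)
       (hcomp C (tens C (eps s t) (idm C r))
          (hcomp C (assocU s t r) (tens C (idm C s) (eps r t))))) /\
  (forall s1 s2 t1 t2 (f1 : hom C s1 t1) (f2 : hom C s2 t2),
      hcomp C (eps t1 t2) (tens C f1 f2) = hcomp C (tens C f2 f1) (eps s1 s2)).

End Defs.

(* Main.v *)
Set Warnings "-all".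
From HB Require Import structures.
From mathcomp Require Import all_boot all_order all_algebra complex.
From mathcomp Require Import all_classical all_reals all_analysis.
From Stdlib Require Import Eqdep.
Require Import Defs.
From mathcomp Require Import reals normedtype.
Set Warnings "-all".
Set Implicit Arguments. Unset Strict Implicit. Unset Printing Implicit Defensive.

Section Basics.
Variables (R : realType) (C : MonCstarCat R).
Local Notation O := (Ob C).
Local Notation "g ⊚ f" := (hcomp C g f) (at level 40, left associativity).
Local Notation "f ⊗ g" := (tens C f g) (at level 35).
Local Notation I := (idm C).
Local Notation st := (star C).

Lemma cA (a b c d : O) (h : hom C c d) (g : hom C b c) (f : hom C a b) :
  h ⊚ (g ⊚ f) = h ⊚ g ⊚ f.
Proof. exact: compA. Qed.

Lemma compAr (a b c d e : O) (x : hom C c d) (y : hom C b c) (z : hom C e d) (w : hom C b e)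
  (t : hom C a b) : x ⊚ y = z ⊚ w -> x ⊚ (y ⊚ t) = z ⊚ (w ⊚ t).
Proof. by move=> H; rewrite !cA H. Qed.

Lemma compAr1 (a b c d : O) (x : hom C c d) (y : hom C b c) (z : hom C b d)
  (t : hom C a b) : x ⊚ y = z -> x ⊚ (y ⊚ t) = z ⊚ t.
Proof. by move=> H; rewrite cA H. Qed.

Definition cm (a b : O) (e : a = b) : hom C a b :=
  match e in _ = y return hom C a y with erefl => I a end.

Lemma cm_id (a : O) (e : a = a) : cm e = I a.
Proof. by rewrite (EqdepTheory.UIP _ _ _ e erefl). Qed.

Lemma cm_pi (a b : O) (e e' : a = b) : cm e = cm e'.
Proof. by rewrite (EqdepTheory.UIP _ _ _ e e'). Qed.

Lemma cm_trans (a b c : O) (e1 : a = b) (e2 : b = c) : cm e2 ⊚ cm e1 = cm (etrans e1 e2).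
Proof. by destruct e2; destruct e1; rewrite /= comp1m. Qed.

Lemma cm_transr (a b c d : O) (e1 : a = b) (e2 : b = c) (t : hom C d a) :
  cm e2 ⊚ (cm e1 ⊚ t) = cm (etrans e1 e2) ⊚ t.
Proof. by rewrite cA cm_trans. Qed.

Lemma cm_cancel (a b c : O) (e : a = b) (x : hom C a c) : x ⊚ cm (esym e) ⊚ cm e = x.
Proof. by rewrite -cA cm_trans cm_id compm1. Qed.

Lemma tens_compr (a1 a2 b1 b2 c1 c2 d : O) (s1 : hom C b1 c1) (t1 : hom C a1 b1)
  (s2 : hom C b2 c2) (t2 : hom C a2 b2) (T : hom C d (omul C a1 a2)) :
  (s1 ⊗ s2) ⊚ ((t1 ⊗ t2) ⊚ T) = ((s1 ⊚ t1) ⊗ (s2 ⊚ t2)) ⊚ T.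
Proof. by rewrite cA tens_comp. Qed.

Lemma star_I (a : O) : st (I a) = I a.
Proof.
have H : st (I a) = st (I a) ⊚ I a by rewrite compm1.
by rewrite H -{2}(starK (I a)) -star_comp compm1 starK.
Qed.

Lemma cm_star (a b : O) (e : a = b) : st (cm e) = cm (esym e).
Proof. by destruct e; rewrite /= star_I. Qed.

Lemma cm_tens (a1 a2 b1 b2 : O) (e1 : a1 = b1) (e2 : a2 = b2) :
  cm e1 ⊗ cm e2 = cm (f_equal2 (omul C) e1 e2).
Proof. by destruct e1; destruct e2; rewrite !cm_id tens_id. Qed.

Lemma HomEqP (a b a' b' : O) (f : hom C a b) (g : hom C a' b') :
  HomEq (hom C) f g -> forall (e1 : a = a') (e2 : b = b'), g = cm e2 ⊚ f ⊚ cm (esym e1).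
Proof.
move=> H e1 e2; subst a' b'; rewrite /= comp1m compm1.
exact: (esym (EqdepTheory.inj_pair2 _ _ _ _ _ H)).
Qed.

Lemma eqHomEq (a b a' b' : O) (f : hom C a b) (g : hom C a' b') (e1 : a = a') (e2 : b = b') :
  g = cm e2 ⊚ f ⊚ cm (esym e1) -> HomEq (hom C) f g.
Proof. by subst a' b'; rewrite /= comp1m compm1 => ->. Qed.

Lemma HomEq_sym (a b a' b' : O) (f : hom C a b) (g : hom C a' b') :
  HomEq (hom C) f g -> HomEq (hom C) g f.
Proof. by rewrite /HomEq => ->. Qed.

Lemma unitary_I (a : O) : unitary (I a).
Proof. by rewrite /unitary star_I comp1m. Qed.

Lemma unitary_cm (a b : O) (e : a = b) : unitary (cm e).
Proof. by destruct e; exact: unitary_I. Qed.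

Lemma unitary_comp (a b c : O) (g : hom C b c) (f : hom C a b) :
  unitary g -> unitary f -> unitary (g ⊚ f).
Proof.
move=> [g1 g2] [f1 f2]; rewrite /unitary star_comp; split.
  by rewrite -cA [st g ⊚ (g ⊚ f)]cA g1 comp1m.
by rewrite -cA [f ⊚ (st f ⊚ st g)]cA f2 comp1m.
Qed.

Lemma unitary_star (a b : O) (f : hom C a b) : unitary f -> unitary (st f).
Proof. by move=> [f1 f2]; rewrite /unitary starK. Qed.

Lemma unitary_tens (a1 a2 b1 b2 : O) (f : hom C a1 b1) (g : hom C a2 b2) :
  unitary f -> unitary g -> unitary (f ⊗ g).
Proof.
move=> [f1 f2] [g1 g2]; rewrite /unitary star_tens -!tens_comp f1 f2 g1 g2.
by rewrite !tens_id.
Qed.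

Lemma tensA1 (a1 a2 a3 b1 b2 b3 : O) (f1 : hom C a1 b1) (f2 : hom C a2 b2) (f3 : hom C a3 b3) :
  (f1 ⊗ f2) ⊗ f3 = cm (@omulA _ C b1 b2 b3) ⊚ (f1 ⊗ (f2 ⊗ f3)) ⊚ cm (esym (@omulA _ C a1 a2 a3)).
Proof. exact: HomEqP (tensA f1 f2 f3) _ _. Qed.

Lemma tensA2 (a1 a2 a3 b1 b2 b3 : O) (f1 : hom C a1 b1) (f2 : hom C a2 b2) (f3 : hom C a3 b3) :
  f1 ⊗ (f2 ⊗ f3) = cm (esym (@omulA _ C b1 b2 b3)) ⊚ ((f1 ⊗ f2) ⊗ f3) ⊚ cm (@omulA _ C a1 a2 a3).
Proof.
rewrite (HomEqP (HomEq_sym (tensA f1 f2 f3)) (esym (@omulA _ C a1 a2 a3)) (esym (@omulA _ C b1 b2 b3))).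
by rewrite (cm_pi (esym (esym _)) (@omulA _ C a1 a2 a3)).
Qed.

Lemma tens1 (a b : O) (t : hom C a b) :
  I (ounit C) ⊗ t = cm (esym (@omul1x _ C b)) ⊚ t ⊚ cm (@omul1x _ C a).
Proof.
rewrite (HomEqP (HomEq_sym (tens1x t)) (esym (@omul1x _ C a)) (esym (@omul1x _ C b))).
by rewrite (cm_pi (esym (esym _)) (@omul1x _ C a)).
Qed.

Lemma tens1r (a b : O) (t : hom C a b) :
  t ⊗ I (ounit C) = cm (esym (@omulx1 _ C b)) ⊚ t ⊚ cm (@omulx1 _ C a).
Proof.
rewrite (HomEqP (HomEq_sym (tensx1 t)) (esym (@omulx1 _ C a)) (esym (@omulx1 _ C b))).
by rewrite (cm_pi (esym (esym _)) (@omulx1 _ C a)).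
Qed.

Lemma assocU_cm (a b c : O) : assocU a b c = cm (@omulA _ C a b c).
Proof.
rewrite /assocU; move: (@omulA _ C a b c); move: (omul C (omul C a b) c) => x e.
by destruct e.
Qed.

Lemma cm_tensI1 (a b c : O) (e : a = b) : cm e ⊗ I c = cm (f_equal2 (omul C) e (erefl c)).
Proof. by rewrite -cm_tens (cm_id (erefl c)). Qed.
Lemma cm_tensI2 (a b c : O) (e : a = b) : I c ⊗ cm e = cm (f_equal2 (omul C) (erefl c) e).
Proof. by rewrite -cm_tens (cm_id (erefl c)). Qed.
End Basics.

Section Main.
Variables (R : realType) (C : MonCstarCat R) (perp : Ob C -> Ob C -> Prop).
Local Notation O := (Ob C).
Local Notation "g ⊚ f" := (hcomp C g f) (at level 40, left associativity).
Local Notation "f ⊗ g" := (tens C f g) (at level 35).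
Local Notation I := (idm C).
Local Notation st := (star C).
Hypothesis perp_sym : forall a b, perp a b -> perp b a.
Hypothesis perp_comm : forall r1 r2, perp r1 r2 -> omul C r1 r2 = omul C r2 r1.
Hypothesis perp_tens : forall s1 s2 t1 t2 (f1 : hom C s1 t1) (f2 : hom C s2 t2),
      perp s1 s2 -> perp t1 t2 -> HomEq (hom C) (tens C f1 f2) (tens C f2 f1).

Definition F (a b a' b' : O) (u : hom C a a') (v : hom C b b') (h : perp a' b') :
  hom C (omul C a b) (omul C b a) :=
  (st v ⊗ st u) ⊚ cm (perp_comm h) ⊚ (u ⊗ v).

Lemma F_conj (a b a' b' a'' b'' : O) (u : hom C a a') (v : hom C b b')
  (x : hom C a' a'') (y : hom C b' b'') (h : perp a' b') (h' : perp a'' b'') :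
  unitary x -> unitary y -> F (x ⊚ u) (y ⊚ v) h' = F u v h.
Proof.
move=> [x1 x2] [y1 y2].
have T := HomEqP (perp_tens x y h h') (perp_comm h) (perp_comm h').
have T2 : cm (perp_comm h') ⊚ (x ⊗ y) = (y ⊗ x) ⊚ cm (perp_comm h).
  by rewrite T cm_cancel.
have T3 : (st y ⊗ st x) ⊚ (y ⊗ x) = I _.
  by rewrite -tens_comp y1 x1 tens_id.
rewrite /F !star_comp !tens_comp -!cA (compAr _ T2) (compAr1 _ T3) comp1m.
by [].
Qed.

Lemma F_indep (a b a' b' a'' b'' : O) (u : hom C a a') (v : hom C b b')
  (u' : hom C a a'') (v' : hom C b b'') (h : perp a' b') (h' : perp a'' b'') :
  unitary u -> unitary v -> unitary u' -> unitary v' -> F u v h = F u' v' h'.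
Proof.
move=> Hu Hv Hu' Hv'.
have E1 : u' = (u' ⊚ st u) ⊚ u by rewrite -cA (proj1 Hu) compm1.
have E2 : v' = (v' ⊚ st v) ⊚ v by rewrite -cA (proj1 Hv) compm1.
rewrite E1 E2 (F_conj _ _ h) //; apply: unitary_comp => //; exact: unitary_star.
Qed.

Lemma F_nat (s1 s2 t1 t2 x1 x2 y1 y2 : O) (f1 : hom C s1 t1) (f2 : hom C s2 t2)
  (a : hom C s1 x1) (b : hom C s2 x2) (c : hom C t1 y1) (d : hom C t2 y2)
  (hs : perp x1 x2) (ht : perp y1 y2) :
  unitary a -> unitary b -> unitary c -> unitary d ->
  F c d ht ⊚ (f1 ⊗ f2) = (f2 ⊗ f1) ⊚ F a b hs.
Proof.
move=> [a1 a2] [b1 b2] [c1 c2] [d1 d2].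
have T := HomEqP (perp_tens (c ⊚ f1 ⊚ st a) (d ⊚ f2 ⊚ st b) hs ht) (perp_comm hs) (perp_comm ht).
have H1 : (c ⊗ d) ⊚ (f1 ⊗ f2) = ((c ⊚ f1 ⊚ st a) ⊗ (d ⊚ f2 ⊚ st b)) ⊚ (a ⊗ b).
  by rewrite -!tens_comp -!cA a1 b1 !compm1.
have H2 : cm (perp_comm ht) ⊚ ((c ⊚ f1 ⊚ st a) ⊗ (d ⊚ f2 ⊚ st b)) =
          ((d ⊚ f2 ⊚ st b) ⊗ (c ⊚ f1 ⊚ st a)) ⊚ cm (perp_comm hs).
  by rewrite T cm_cancel.
have H3 : (st d ⊗ st c) ⊚ ((d ⊚ f2 ⊚ st b) ⊗ (c ⊚ f1 ⊚ st a)) = (f2 ⊗ f1) ⊚ (st b ⊗ st a).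
  by rewrite -!tens_comp !cA d1 c1 !comp1m.
rewrite /F -!cA H1 (compAr _ H2) (compAr _ H3).
by [].
Qed.

Lemma F_unitary (a b a' b' : O) (u : hom C a a') (v : hom C b b') (h : perp a' b') :
  unitary u -> unitary v -> unitary (F u v h).
Proof.
move=> Hu Hv; rewrite /F; apply: unitary_comp; last exact: unitary_tens.
apply: unitary_comp; last exact: unitary_cm.
by apply: unitary_tens; apply: unitary_star.
Qed.

Lemma F_perp (a b : O) (h : perp a b) : F (I a) (I b) h = cm (perp_comm h).
Proof. by rewrite /F !star_I !tens_id comp1m compm1. Qed.

Lemma F_star (a b a' b' : O) (u : hom C a a') (v : hom C b b') (h : perp a' b') :
  st (F u v h) = F v u (perp_sym h).
Proof.
rewrite /F !star_comp !star_tens !starK cm_star -!cA.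
by rewrite (cm_pi (esym _) (perp_comm (perp_sym h))).
Qed.

Lemma F_unit_l (r r' : O) (v : hom C r r') (h : perp (ounit C) r') :
  unitary v -> HomEq (hom C) (F (I (ounit C)) v h) (I r).
Proof.
move=> [v1 v2].
apply: (eqHomEq (e1 := @omul1x _ C r) (e2 := @omulx1 _ C r)).
rewrite /F star_I tens1 tens1r -!cA !cm_transr cm_trans !cm_id !comp1m !compm1.
by rewrite v1.
Qed.

Lemma F_unit_r (r r' : O) (u : hom C r r') (h : perp r' (ounit C)) :
  unitary u -> HomEq (hom C) (F u (I (ounit C)) h) (I r).
Proof.
move=> [u1 u2].
apply: (eqHomEq (e1 := @omulx1 _ C r) (e2 := @omul1x _ C r)).
rewrite /F star_I tens1 tens1r -!cA !cm_transr cm_trans !cm_id !comp1m !compm1.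
by rewrite u1.
Qed.

Lemma F_hex (s r t s1 r1 t2 : O) (us : hom C s s1) (ur : hom C r r1) (w : hom C t t2)
  (h : perp (omul C s1 r1) t2) (h1 : perp s1 t2) (h2 : perp r1 t2) :
  unitary us -> unitary ur -> unitary w ->
  HomEq (hom C) (F (us ⊗ ur) w h)
     ((F us w h1 ⊗ I r) ⊚ (assocU s t r ⊚ (I s ⊗ F ur w h2))).
Proof.
move=> [us1 us2] [ur1 ur2] [w1 w2].
have L1 : F us w h1 ⊗ I r =
   ((st w ⊗ st us) ⊗ st ur) ⊚ (cm (perp_comm h1) ⊗ I r1) ⊚ ((us ⊗ w) ⊗ ur).
  by rewrite /F -!tens_comp compm1 ur1.
have L2 : I s ⊗ F ur w h2 =
   (st us ⊗ (st w ⊗ st ur)) ⊚ (I s1 ⊗ cm (perp_comm h2)) ⊚ (us ⊗ (ur ⊗ w)).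
  by rewrite /F -!tens_comp compm1 us1.
have M : forall x (T : hom C x _), ((us ⊗ w) ⊗ ur) ⊚ (cm (@omulA _ C s t r) ⊚ ((st us ⊗ (st w ⊗ st ur)) ⊚ T))
     = cm (@omulA _ C s1 t2 r1) ⊚ T.
  move=> x T; rewrite tensA1 -!cA cm_transr cm_id comp1m.
  by rewrite tens_compr -tens_comp us2 w2 ur2 !tens_id comp1m.
apply: (eqHomEq (e1 := esym (@omulA _ C s r t)) (e2 := @omulA _ C t s r)).
rewrite assocU_cm L1 L2 -!cA M cm_tensI1 cm_tensI2.
rewrite [in X in X = _]tensA2 [in X in X = _]tensA1.
rewrite /F star_tens -!cA !cm_transr.
by rewrite (cm_pi (esym (esym _)) (@omulA _ C s r t)) (cm_pi _ (perp_comm h)).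
Qed.

Variables P1 P2 : O -> Prop.
Hypotheses (FM1 : full_monoidal_sub P1) (EQ1 : equivalent_to_C P1)
  (FM2 : full_monoidal_sub P2) (EQ2 : equivalent_to_C P2)
  (P12 : forall r1 r2, P1 r1 -> P2 r2 -> perp r1 r2).

Definition pk1 (a : O) : {b : O & {u : hom C a b | P1 b /\ unitary u}} :=
  let (b, H) := cid (EQ1 a) in existT _ b (cid H).
Definition pk2 (a : O) : {b : O & {u : hom C a b | P2 b /\ unitary u}} :=
  let (b, H) := cid (EQ2 a) in existT _ b (cid H).
Definition o1 a := projT1 (pk1 a).
Definition o2 a := projT1 (pk2 a).
Definition u1 a : hom C a (o1 a) := sval (projT2 (pk1 a)).
Definition u2 a : hom C a (o2 a) := sval (projT2 (pk2 a)).
Lemma P1o1 a : P1 (o1 a). Proof. exact: (svalP (projT2 (pk1 a))).1. Qed.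
Lemma P2o2 a : P2 (o2 a). Proof. exact: (svalP (projT2 (pk2 a))).1. Qed.
Lemma U1 a : unitary (u1 a). Proof. exact: (svalP (projT2 (pk1 a))).2. Qed.
Lemma U2 a : unitary (u2 a). Proof. exact: (svalP (projT2 (pk2 a))).2. Qed.

Definition eps (a b : O) : hom C (omul C a b) (omul C b a) :=
  F (u1 a) (u2 b) (P12 (P1o1 a) (P2o2 b)).

Lemma eps_repr (a b a' b' : O) (u : hom C a a') (v : hom C b b') (h : perp a' b') :
  unitary u -> unitary v -> eps a b = F u v h.
Proof. move=> Hu Hv; exact: F_indep (U1 a) (U2 b) Hu Hv. Qed.

Lemma main_ex : exists eps : forall a b, hom C (omul C a b) (omul C b a),
    is_symmetry eps /\
    (forall r1 r2, perp r1 r2 -> HomEq (hom C) (eps r1 r2) (idm C (omul C r1 r2))) /\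
    (forall eps' : forall a b, hom C (omul C a b) (omul C b a),
        is_symmetry eps' ->
        (forall r1 r2, perp r1 r2 -> HomEq (hom C) (eps' r1 r2) (idm C (omul C r1 r2))) ->
        forall a b, eps' a b = eps a b).
Proof.
exists eps; split; [|split].
- split; [|split; [|split; [|split; [|split]]]].
  + by move=> a b; apply: F_unitary; [exact: U1 | exact: U2].
  + move=> a b; rewrite /eps F_star.
    exact: F_indep (U2 b) (U1 a) (U1 b) (U2 a).
  + move=> r; rewrite (eps_repr (P12 FM1.1 (P2o2 r)) (unitary_I _) (U2 r)).
    exact: F_unit_l (U2 r).
  + move=> r; rewrite (eps_repr (P12 (P1o1 r) FM2.1) (U1 r) (unitary_I _)).
    exact: F_unit_r (U1 r).
  + move=> s r t.
    rewrite (eps_repr (P12 (FM1.2 _ _ (P1o1 s) (P1o1 r)) (P2o2 t))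
               (unitary_tens (U1 s) (U1 r)) (U2 t)).
    rewrite /eps; exact: F_hex (U1 s) (U1 r) (U2 t).
  + move=> s1 s2 t1 t2 f1 f2; rewrite /eps.
    exact: F_nat (U1 s1) (U2 s2) (U1 t1) (U2 t2).
- move=> r1 r2 h; rewrite (eps_repr h (unitary_I _) (unitary_I _)) F_perp.
  apply: (eqHomEq (e1 := erefl) (e2 := esym (perp_comm h))).
  by rewrite cm_trans !cm_id compm1.
- move=> eps' [_ [_ [_ [_ [_ Hnat]]]]] Hp a b.
  have h := P12 (P1o1 a) (P2o2 b).
  have E : eps' (o1 a) (o2 b) = cm (perp_comm (P12 (P1o1 a) (P2o2 b))).
    rewrite (HomEqP (HomEq_sym (Hp _ _ (P12 (P1o1 a) (P2o2 b)))) erefl (perp_comm (P12 (P1o1 a) (P2o2 b)))).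
    by rewrite cm_id !compm1.
  have N := Hnat _ _ _ _ (u1 a) (u2 b).
  rewrite /eps /F -E -cA N cA -tens_comp (proj1 (U2 b)) (proj1 (U1 a)) tens_id comp1m.
  by [].
Qed.

End Main.

Theorem lemmaA2 (R : realType) (C : MonCstarCat R) (perp : Ob C -> Ob C -> Prop)
  (perp_sym : forall a b, perp a b -> perp b a)
  (perp_comm : forall r1 r2, perp r1 r2 -> omul C r1 r2 = omul C r2 r1)
  (perp_tens : forall s1 s2 t1 t2 (f1 : hom C s1 t1) (f2 : hom C s2 t2),
      perp s1 s2 -> perp t1 t2 -> HomEq (hom C) (tens C f1 f2) (tens C f2 f1))
  (perp_subcats : exists P1 P2 : Ob C -> Prop,
      full_monoidal_sub P1 /\ equivalent_to_C P1 /\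
      full_monoidal_sub P2 /\ equivalent_to_C P2 /\
      (forall r1 r2, P1 r1 -> P2 r2 -> perp r1 r2)) :
  exists eps : forall a b, hom C (omul C a b) (omul C b a),
    is_symmetry eps /\
    (forall r1 r2, perp r1 r2 -> HomEq (hom C) (eps r1 r2) (idm C (omul C r1 r2))) /\
    (forall eps' : forall a b, hom C (omul C a b) (omul C b a),
        is_symmetry eps' ->
        (forall r1 r2, perp r1 r2 -> HomEq (hom C) (eps' r1 r2) (idm C (omul C r1 r2))) ->
        forall a b, eps' a b = eps a b).
Proof.
case: perp_subcats => [P1 [P2 [FM1 [EQ1 [FM2 [EQ2 P12]]]]]].
exact: (main_ex perp_sym perp_comm perp_tens FM1 EQ1 FM2 EQ2 P12).
Qed.
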